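(* Let $\delta>0$, $L \in \mathbb N$, $A \subset \Lambda_n$, $x,y \in A$ with $\bar y = \bar x + L$, and let $\gamma$ be a self-avoiding nearest-neighbour walk in $A$ from $x$ to $y$. Assume $|\gamma| < (1+\delta) L$. Then $\gamma$ has at least $(1 - 3\delta) L$ pre-regeneration points.
   Context: $\Lambda_n=([0,n]\times(-n/2,n/2]^{d-1})\cap\mathbb Z^d$ with nearest-neighbour edges and periodic boundary conditions in the last $d-1$ coordinates; points $x=(\bar x,\hat x)$. A self-avoiding walk is identified with its set of vertices $\gamma$, totally ordered by order of visit; $|\gamma|$ is its number of vertices. For $w\in\Lambda_n$, $\mathcal C_w=\{u\in\Lambda_n:\bar u-\bar w\ge|\hat u-\hat w|\}\cup\{u\in\Lambda_n:\bar u\ge\bar w+\log n\}$ (with $|\hat u-\hat w|$ the transverse distance). A point $w\in\gamma$ is a pre-regeneration point of $\gamma$ if $u\in\mathcal C_w$ for all $u\in\gamma$ with $u\ge w$, and $\bar u<\bar w$ for all $u\in\gamma$ with $u<w$. *)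

(* Defs.v *)
From Stdlib Require Import Reals Lra Lia ZArith List.
Open Scope R_scope.

(* A point x = (xbar, xhat) with xbar : Z and xhat : list Z (the last d-1
   coordinates). *)
Definition point : Type := (Z * list Z)%type.
Definition pbar (x : point) : Z := fst x.
Definition phat (x : point) : list Z := snd x.

Definition in_Lambda (d n : nat) (x : point) : Prop :=
  (0 <= pbar x <= Z.of_nat n)%Z /\
  length (phat x) = Nat.pred d /\
  Forall (fun z => (- Z.of_nat n < 2 * z <= Z.of_nat n)%Z) (phat x).

Definition per_adj1 (n : nat) (a b : Z) : Prop :=
  ((a - b - 1) mod Z.of_nat n = 0)%Z \/ ((a - b + 1) mod Z.of_nat n = 0)%Z.

(* Nearest-neighbour adjacency in Lambda_n, periodic in the last d-1
   coordinates. *)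
Definition nn_adj (n : nat) (x y : point) : Prop :=
  (Z.abs (pbar x - pbar y) = 1%Z /\ phat x = phat y) \/
  (pbar x = pbar y /\ length (phat x) = length (phat y) /\
   exists i, (i < length (phat x))%nat /\
     per_adj1 n (nth i (phat x) 0%Z) (nth i (phat y) 0%Z) /\
     forall j, j <> i -> nth j (phat x) 0%Z = nth j (phat y) 0%Z).

Definition tor_dist1 (n : nat) (a b : Z) : Z :=
  let r := ((a - b) mod Z.of_nat n)%Z in Z.min r (Z.of_nat n - r).

Definition transverse_dist (n : nat) (u w : list Z) : R :=
  sqrt (fold_right Rplus 0
          (map (fun p => (IZR (tor_dist1 n (fst p) (snd p))) ^ 2)
               (combine u w))).

Definition cone (d n : nat) (w u : point) : Prop :=
  in_Lambda d n u /\
  (IZR (pbar u - pbar w) >= transverse_dist n (phat u) (phat w) \/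
   IZR (pbar u) >= IZR (pbar w) + ln (INR n)).

Definition saw_in (n : nat) (A : point -> Prop) (x y : point)
  (gamma : list point) : Prop :=
  NoDup gamma /\
  (forall u, In u gamma -> A u) /\
  hd_error gamma = Some x /\
  last gamma x = y /\ gamma <> nil /\
  (forall i, (S i < length gamma)%nat ->
     nn_adj n (nth i gamma x) (nth (S i) gamma x)).

Definition pre_regeneration (d n : nat) (gamma : list point) (j : nat)
  : Prop :=
  (j < length gamma)%nat /\
  let w := nth j gamma (0%Z, nil) in
  (forall i, (j <= i < length gamma)%nat ->
      cone d n w (nth i gamma (0%Z, nil))) /\
  (forall i, (i < j)%nat -> (pbar (nth i gamma (0%Z, nil)) < pbar w)%Z).

(* Main.v *)
Require Import Defs.
From Stdlib Require Import Reals ZArith List Lia Lra.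
Open Scope R_scope.

Definition goodp (p : nat -> Z) (m j : nat) : Prop :=
  (j <= m)%nat /\ (forall i, (i < j)%nat -> (p i < p j)%Z) /\
  (forall k, (j <= k <= m)%nat -> (p j <= p k)%Z).

Fixpoint Dc (p : nat -> Z) (m : nat) : Z :=
  match m with
  | O => 0%Z
  | S m' => (Dc p m' + (if (p (S m') <? p m')%Z then 1 else 0))%Z
  end.

Lemma len_le1 (p : nat -> Z) m c (l : list nat) :
  NoDup l -> (forall j, In j l -> goodp p m j /\ p j = c) -> (length l <= 1)%nat.
Proof.
  intros Hn H. destruct l as [|a [|b l']]; simpl; try lia.
  exfalso. inversion Hn; subst.
  assert (a <> b) by (intro; subst; apply H2; simpl; auto).
  destruct (H a) as [[_ [Pa _]] Ea]; [simpl; auto|].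
  destruct (H b) as [[_ [Pb _]] Eb]; [simpl; auto|].
  destruct (Nat.lt_total a b) as [h|[h|h]]; [|contradiction|].
  - specialize (Pb a h). lia.
  - specialize (Pa b h). lia.
Qed.

Lemma comb (p : nat -> Z) : forall m,
  (forall i, (i < m)%nat -> p (S i) = (p i + 1)%Z \/ p (S i) = (p i - 1)%Z) ->
  exists S M, NoDup S /\ (forall j, In j S -> goodp p m j) /\
    (forall i, (i <= m)%nat -> (p i <= M)%Z) /\
    (Z.of_nat (length S) + Dc p m >= M - p 0%nat)%Z.
Proof.
  induction m as [|m IH]; intros Hs.
  - exists nil, (p 0%nat). split; [constructor|]. split; [simpl; tauto|].
    split; [intros i Hi; replace i with 0%nat by lia; lia|]. simpl; lia.
  - destruct IH as [S0 [M [HN [HG [HM HL]]]]]; [intros; apply Hs; lia|].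
    destruct (Hs m (Nat.lt_succ_diag_r m)) as [Hu|Hd].
    + assert (HD : Dc p (S m) = Dc p m) by (simpl; destruct (Z.ltb_spec (p (S m)) (p m)); lia).
      destruct (Z_le_gt_dec (p (S m)) M) as [Hle|Hgt].
      * exists S0, M. split; auto. split.
        { intros j Hj. destruct (HG j Hj) as [H1 [H2 H3]]. split; [lia|]. split; auto.
          intros k Hk. destruct (Nat.eq_dec k (S m)) as [->|]; [|apply H3; lia].
          specialize (H3 m ltac:(lia)). lia. }
        split; [intros i Hi; destruct (Nat.eq_dec i (S m)) as [->|]; [lia|apply HM; lia]|].
        lia.
      * assert (p m = M) by (specialize (HM m (le_n _)); lia).
        exists (S m :: S0), (M + 1)%Z. split.
        { constructor; auto. intro Hin. destruct (HG _ Hin). lia. }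
        split.
        { intros j [<-|Hj].
          - split; [lia|]. split.
            + intros i Hi. specialize (HM i ltac:(lia)). lia.
            + intros k Hk. replace k with (S m) by lia. lia.
          - destruct (HG j Hj) as [H1 [H2 H3]]. split; [lia|]. split; auto.
            intros k Hk. destruct (Nat.eq_dec k (S m)) as [->|]; [|apply H3; lia].
            specialize (H3 m ltac:(lia)). lia. }
        split; [intros i Hi; destruct (Nat.eq_dec i (S m)) as [->|]; [lia|specialize (HM i ltac:(lia)); lia]|].
        simpl length. lia.
    + assert (HD : Dc p (S m) = (Dc p m + 1)%Z) by (simpl; destruct (Z.ltb_spec (p (S m)) (p m)); lia).
      set (f := fun j => (p j <=? p (S m))%Z).
      exists (filter f S0), M. split; [apply NoDup_filter; auto|]. split.
      { intros j Hj. apply filter_In in Hj as [Hj Hf]. unfold f in Hf. apply Z.leb_le in Hf.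
        destruct (HG j Hj) as [H1 [H2 H3]]. split; [lia|]. split; auto.
        intros k Hk. destruct (Nat.eq_dec k (S m)) as [->|]; [lia|apply H3; lia]. }
      split; [intros i Hi; destruct (Nat.eq_dec i (S m)) as [->|]; [specialize (HM m ltac:(lia)); lia|apply HM; lia]|].
      assert (Hl := filter_length f S0).
      assert (length (filter (fun x => negb (f x)) S0) <= 1)%nat.
      { apply (len_le1 p m (p m)). apply NoDup_filter; auto.
        intros j Hj. apply filter_In in Hj as [Hj Hf]. unfold f in Hf.
        apply Bool.negb_true_iff, Z.leb_gt in Hf. destruct (HG j Hj) as [H1 [H2 H3]].
        split; [split; auto|]. specialize (H3 m ltac:(lia)). lia. }
      lia.
Qed.

Lemma tor_step n a a' b : per_adj1 n a a' ->
  (Z.abs (tor_dist1 n a' b) <= Z.abs (tor_dist1 n a b) + 1)%Z.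
Proof.
  intros Hp. unfold per_adj1, tor_dist1 in *. set (N := Z.of_nat n) in *.
  destruct (Z.eq_dec N 0) as [E|E].
  - rewrite E, !Zmod_0_r in *. lia.
  - assert (HN : (0 < N)%Z) by lia.
    assert (Hr := Z.mod_pos_bound (a - b) N HN).
    assert (Hr' := Z.mod_pos_bound (a' - b) N HN).
    assert (Q := Z.div_mod (a - b) N E).
    assert (Q' := Z.div_mod (a' - b) N E).
    set (r := ((a - b) mod N)%Z) in *. set (r' := ((a' - b) mod N)%Z) in *.
    set (q := ((a - b) / N)%Z) in *. set (q' := ((a' - b) / N)%Z) in *.
    clearbody r r' q q' N. destruct Hp as [H|H]; apply Z.mod_divide in H; auto; destruct H as [k Hk].
    + assert (Hc: r' = (r - 1)%Z \/ r' = (r - 1 + N)%Z).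
      { assert (Ee : (N * (q' - q + k) = r - 1 - r')%Z) by (clear -Hk Q Q'; nia).
        set (e := (q' - q + k)%Z) in *.
        destruct (Z_le_gt_dec e (-2)); [nia|]. destruct (Z_le_gt_dec 1 e); [nia|].
        assert (e = 0 \/ e = -1)%Z as [He|He] by lia; rewrite He in Ee; lia. }
      lia.
    + assert (Hc: r' = (r + 1)%Z \/ r' = (r + 1 - N)%Z).
      { assert (Ee : (N * (q' - q + k) = r + 1 - r')%Z) by (clear -Hk Q Q'; nia).
        set (e := (q' - q + k)%Z) in *.
        destruct (Z_le_gt_dec e (-1)); [nia|]. destruct (Z_le_gt_dec 2 e); [nia|].
        assert (e = 0 \/ e = 1)%Z as [He|He] by lia; rewrite He in Ee; lia. }
      lia.
Qed.

Definition Fs (n : nat) (u w : list Z) : R :=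
  fold_right Rplus 0
    (map (fun p => (IZR (tor_dist1 n (fst p) (snd p))) ^ 2) (combine u w)).

Lemma Fs_nonneg n u w : 0 <= Fs n u w.
Proof.
  unfold Fs. induction (combine u w) as [|[a b] l IH]; cbn [fold_right map fst snd]; [lra|].
  assert (0 <= IZR (tor_dist1 n a b) ^ 2) by (rewrite <- Rsqr_pow2; apply Rle_0_sqr). lra.
Qed.

Lemma Fs_cons n a u b w : Fs n (a :: u) (b :: w) = IZR (tor_dist1 n a b) ^ 2 + Fs n u w.
Proof. reflexivity. Qed.

Lemma sqrt_bound Y Y' : 0 <= Y -> 0 <= Y' -> Y' <= Y + 2 * sqrt Y + 1 -> sqrt Y' <= sqrt Y + 1.
Proof.
  intros H1 H2 H3. assert (Hs := sqrt_pos Y).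
  rewrite <- (sqrt_pow2 (sqrt Y + 1)) by lra. apply sqrt_le_1_alt.
  assert (sqrt Y * sqrt Y = Y) by (apply sqrt_sqrt; lra). nra.
Qed.

Lemma sqrt_bound_inv Y Y' : 0 <= Y -> 0 <= Y' -> sqrt Y' <= sqrt Y + 1 -> Y' <= Y + 2 * sqrt Y + 1.
Proof.
  intros H1 H2 H3. assert (Hs := sqrt_pos Y'). assert (Hs' := sqrt_pos Y).
  assert (sqrt Y * sqrt Y = Y) by (apply sqrt_sqrt; lra).
  assert (sqrt Y' * sqrt Y' = Y') by (apply sqrt_sqrt; lra). nra.
Qed.

Lemma abs_le_sqrt t X : 0 <= X -> Rabs t <= sqrt (t ^ 2 + X).
Proof.
  intros HX. rewrite <- sqrt_Rsqr_abs. apply sqrt_le_1_alt. unfold Rsqr. nra.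
Qed.

Lemma Fs_step n : forall (u u' w : list Z) i, length u = length u' ->
  (forall j, j <> i -> nth j u 0%Z = nth j u' 0%Z) ->
  per_adj1 n (nth i u 0%Z) (nth i u' 0%Z) ->
  sqrt (Fs n u' w) <= sqrt (Fs n u w) + 1.
Proof.
  induction u as [|a u IH]; intros u' w i Hl Hj Hp.
  - destruct u'; [|discriminate]. assert (Hs := sqrt_pos (Fs n nil w)). lra.
  - destruct u' as [|a' u']; [discriminate|]. destruct w as [|b w].
    { unfold Fs; simpl. assert (Hs := sqrt_pos 0). lra. }
    rewrite !Fs_cons. simpl in Hl.
    apply sqrt_bound; try (apply Rplus_le_le_0_compat; [rewrite <- Rsqr_pow2; apply Rle_0_sqr|apply Fs_nonneg]).
    destruct i as [|i].
    + assert (u = u').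
      { apply (nth_ext _ _ 0%Z 0%Z); [lia|]. intros k _. apply (Hj (S k)). lia. }
      subst u'. simpl in Hp. assert (Ht := tor_step n a a' b Hp).
      apply IZR_le in Ht. rewrite plus_IZR, !abs_IZR in Ht.
      set (t := IZR (tor_dist1 n a b)) in *. set (t' := IZR (tor_dist1 n a' b)) in *.
      assert (HX := Fs_nonneg n u w).
      assert (Ha := abs_le_sqrt t _ HX).
      assert (t' ^ 2 <= (Rabs t + 1) ^ 2).
      { rewrite <- (pow2_abs t'). assert (0 <= Rabs t') by apply Rabs_pos. nra. }
      assert (0 <= Rabs t) by apply Rabs_pos. assert (Rabs t ^ 2 = t ^ 2) by apply pow2_abs.
      nra.
    + assert (a = a') by exact (Hj 0%nat ltac:(lia)). subst a'.
      assert (IHs := IH u' w i ltac:(lia) (fun j h => Hj (S j) ltac:(lia)) Hp).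
      apply sqrt_bound_inv in IHs; try apply Fs_nonneg.
      set (c := IZR (tor_dist1 n a b) ^ 2).
      assert (0 <= c) by (unfold c; rewrite <- Rsqr_pow2; apply Rle_0_sqr).
      assert (sqrt (Fs n u w) <= sqrt (c + Fs n u w)) by (apply sqrt_le_1_alt; lra).
      lra.
Qed.

Lemma Fs_self n u : Fs n u u = 0.
Proof.
  induction u as [|a u IH]; [reflexivity|]. rewrite Fs_cons, IH.
  unfold tor_dist1. rewrite Z.sub_diag, Zmod_0_l, Z.sub_0_r.
  replace (Z.min 0 (Z.of_nat n)) with 0%Z by lia. simpl. ring.
Qed.

Fixpoint pp (g : nat -> point) (i : nat) : Z :=
  match i with
  | O => pbar (g O)
  | S i' => if (pbar (g (S i')) - pbar (g i') =? 1)%Z then (pp g i' + 1)%Z else (pp g i' - 1)%Z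
  end.

Lemma pp_S g i : pp g (S i) =
  if (pbar (g (S i)) - pbar (g i) =? 1)%Z then (pp g i + 1)%Z else (pp g i - 1)%Z.
Proof. reflexivity. Qed.

Lemma last_nth {A} (l : list A) d : last l d = nth (length l - 1) l d.
Proof.
  induction l as [|a l IH]; [reflexivity|].
  destruct l as [|b l]; [reflexivity|].
  change (last (b :: l) d = nth (length l) (b :: l) d).
  rewrite IH. simpl length. f_equal. lia.
Qed.

Lemma Dc_S p k : Dc p (S k) = (Dc p k + (if (p (S k) <? p k)%Z then 1 else 0))%Z.
Proof. reflexivity. Qed.

Lemma td_Fs n u w : transverse_dist n u w = sqrt (Fs n u w).
Proof. reflexivity. Qed.

Theorem lemma5p4 (d n : nat) (hd : (1 <= d)%nat)
  (delta : R) (hdelta : 0 < delta) (L : nat)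
  (A : point -> Prop) (hA : forall u, A u -> in_Lambda d n u)
  (x y : point) (hx : A x) (hy : A y)
  (hxy : pbar y = (pbar x + Z.of_nat L)%Z)
  (gamma : list point) (hgamma : saw_in n A x y gamma)
  (hlen : INR (length gamma) < (1 + delta) * INR L) :
  exists S : list nat,
    NoDup S /\ (forall j, In j S -> pre_regeneration d n gamma j) /\
    INR (length S) >= (1 - 3 * delta) * INR L.
Proof.
  destruct hgamma as [HND [HA [Hhd [Hlast [Hne Hadj]]]]].
  set (g := fun i => nth i gamma (0%Z, @nil Z)).
  set (m := (length gamma - 1)%nat).
  assert (Hlen : length gamma = S m) by (unfold m; destruct gamma; [congruence|]; simpl; lia).
  assert (Hg0 : g 0%nat = x) by (unfold g; destruct gamma; simpl in Hhd; inversion Hhd; reflexivity).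
  assert (Hgm : g m = y).
  { rewrite <- Hlast, last_nth. unfold g. apply nth_indep. lia. }
  assert (HgA : forall i, (i <= m)%nat -> A (g i)).
  { intros i Hi. apply HA. unfold g. apply nth_In. lia. }
  assert (Hadj' : forall i, (i < m)%nat -> nn_adj n (g i) (g (S i))).
  { intros i Hi. specialize (Hadj i ltac:(lia)). unfold g.
    rewrite (@nth_indep _ gamma i (0%Z, nil) x) by lia.
    rewrite (@nth_indep _ gamma (S i) (0%Z, nil) x) by lia. exact Hadj. }
  assert (Hstep : forall i, (i < m)%nat ->
    (pp g (S i) = (pp g i + 1)%Z /\ pbar (g (S i)) = (pbar (g i) + 1)%Z /\ phat (g (S i)) = phat (g i)) \/
    (pp g (S i) = (pp g i - 1)%Z /\ pbar (g (S i)) = (pbar (g i) - 1)%Z /\ phat (g (S i)) = phat (g i)) \/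
    (pp g (S i) = (pp g i - 1)%Z /\ pbar (g (S i)) = pbar (g i) /\
     length (phat (g i)) = length (phat (g (S i))) /\
     exists k, (forall j, j <> k -> nth j (phat (g i)) 0%Z = nth j (phat (g (S i))) 0%Z) /\
       per_adj1 n (nth k (phat (g i)) 0%Z) (nth k (phat (g (S i))) 0%Z))).
  { intros i Hi. rewrite pp_S.
    destruct (Hadj' i Hi) as [[H1 H2]|[H1 [H2 [k [_ [H3 H4]]]]]];
      destruct (Z.eqb_spec (pbar (g (S i)) - pbar (g i)) 1).
    - left. repeat split; auto; lia.
    - right; left. repeat split; auto; lia.
    - lia.
    - right; right. repeat split; auto; try lia. exists k. split; auto. }
  set (tau := fun i => (pbar (g i) - pp g i)%Z).
  assert (Htaumono : forall j k, (j <= k <= m)%nat -> (tau j <= tau k)%Z).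
  { intros j k. induction k as [|k IH]; intros Hk.
    - replace j with 0%nat by lia. lia.
    - destruct (Nat.eq_dec j (S k)) as [->|]; [lia|].
      specialize (IH ltac:(lia)). unfold tau in *.
      destruct (Hstep k ltac:(lia)) as [[H1 [H2 _]]|[[H1 [H2 _]]|[H1 [H2 _]]]]; lia. }
  assert (Hdist : forall j k, (j <= k <= m)%nat ->
    transverse_dist n (phat (g k)) (phat (g j)) <= IZR (tau k - tau j)).
  { intros j k. induction k as [|k IH]; intros Hk.
    - replace j with 0%nat by lia. rewrite td_Fs, Fs_self, sqrt_0, Z.sub_diag. lra.
    - destruct (Nat.eq_dec j (S k)) as [->|].
      { rewrite td_Fs, Fs_self, sqrt_0, Z.sub_diag. lra. }
      specialize (IH ltac:(lia)). unfold tau in *.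
      destruct (Hstep k ltac:(lia)) as [[H1 [H2 H3]]|[[H1 [H2 H3]]|[H1 [H2 [H3 [kk [H4 H5]]]]]]].
      + rewrite H3. replace (pbar (g (S k)) - pp g (S k))%Z with (pbar (g k) - pp g k)%Z by lia. exact IH.
      + rewrite H3. replace (pbar (g (S k)) - pp g (S k))%Z with (pbar (g k) - pp g k)%Z by lia. exact IH.
      + rewrite td_Fs in *. 
        assert (Hs := Fs_step n (phat (g k)) (phat (g (S k))) (phat (g j)) kk H3 H4 H5).
        replace (pbar (g (S k)) - pp g (S k) - (pbar (g j) - pp g j))%Z
          with ((pbar (g k) - pp g k - (pbar (g j) - pp g j)) + 1)%Z by lia.
        rewrite plus_IZR. lra. }
  assert (Hcnt : forall k, (k <= m)%nat ->
    (pp g k - pp g 0%nat = Z.of_nat k - 2 * Dc (pp g) k)%Z /\ (tau k - tau 0%nat <= Dc (pp g) k)%Z).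
  { induction k as [|k IH]; intros Hk.
    - simpl. lia.
    - specialize (IH ltac:(lia)). rewrite Dc_S. unfold tau in *.
      destruct (Hstep k ltac:(lia)) as [[H1 [H2 _]]|[[H1 [H2 _]]|[H1 [H2 _]]]];
        destruct (Z.ltb_spec (pp g (S k)) (pp g k)); lia. }
  destruct (comb (pp g) m) as [S [M [HN [HG [HM HL]]]]].
  { intros i Hi. destruct (Hstep i Hi) as [[H1 _]|[[H1 _]|[H1 _]]]; lia. }
  exists S. split; [exact HN|]. split.
  - intros j Hj. destruct (HG j Hj) as [Hjm [Hpre Hsuf]]. unfold pre_regeneration.
    split; [lia|].
    change ((forall i, (j <= i < length gamma)%nat -> cone d n (g j) (g i)) /\
            (forall i, (i < j)%nat -> (pbar (g i) < pbar (g j))%Z)).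
    split.
    + intros i Hi. unfold cone. split; [apply hA, HgA; lia|]. left.
      assert (Hd := Hdist j i ltac:(lia)).
      assert (Hs := Hsuf i ltac:(lia)).
      assert (IZR (tau i - tau j) <= IZR (pbar (g i) - pbar (g j))) by (apply IZR_le; unfold tau; lia).
      lra.
    + intros i Hi. specialize (Hpre i Hi). assert (Ht := Htaumono i j ltac:(lia)).
      unfold tau in Ht. lia.
  - destruct (Hcnt m (le_n _)) as [C1 C2].
    assert (HMm := HM m (le_n _)).
    assert (HLz : (pbar (g m) - pbar (g 0%nat) = Z.of_nat L)%Z) by (rewrite Hgm, Hg0; lia).
    unfold tau in C2.
    assert (Hz : (Z.of_nat (length S) >= 3 * Z.of_nat L - 2 * Z.of_nat m)%Z) by lia.
    rewrite Hlen in hlen. rewrite S_INR in hlen.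
    rewrite !INR_IZR_INZ in *.
    apply Z.ge_le, IZR_le in Hz. rewrite minus_IZR, !mult_IZR in Hz.
    assert (0 <= IZR (Z.of_nat L)) by (apply IZR_le; lia).
    assert (0 <= delta * IZR (Z.of_nat L)) by (apply Rmult_le_pos; lra).
    simpl in Hz. nra.
Qed.
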